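(* Let $n,m\ge 2$ and $G\in\mathcal{O}(K_{n,m})$. Then $G$ has the minimum number of edges among all graphs in $\mathcal{O}(K_{n,m})$ if and only if $G$ is a binary star; in this case $|E(G)|=n+m-1$.
   Context: The local complement $c_v(G)$ complements the edges among the neighbours of $v$. $\mathcal{O}(G)$ is the set of all graphs on the labelled vertex set $V(G)$ obtainable from $G$ by finite sequences of local complements. A binary star is a tree consisting of two star graphs whose centers are joined by an edge (equivalently, two adjacent vertices $a,b$ such that every other vertex is adjacent to exactly one of $a,b$ and to nothing else). *)

(* Defs.v *)
From mathcomp Require Import all_boot.
Set Implicit Arguments. Unset Strict Implicit. Unset Printing Implicit Defensive.

(* A simple graph on the labelled vertex set T is given by its edge set:
   a set of 2-element subsets of T. *)
Definition graph (T : finType) := {set {set T}}.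

Section Graphs.
Variable T : finType.

Definition nbhd (E : graph T) (v : T) : {set T} :=
  [set x | (x != v) && ([set v; x] \in E)].

Definition local_complement (E : graph T) (v : T) : graph T :=
  let N := nbhd E v in
  let P := [set [set x; y] | x in N, y in N & x != y] in
  (E :\: P) :|: (P :\: E).

Definition lc_seq (E : graph T) (s : seq T) : graph T :=
  foldl local_complement E s.

Definition lc_orbit (E H : graph T) : Prop :=
  exists s : seq T, H = lc_seq E s.

Definition binary_star (E : graph T) : Prop :=
  exists a b : T, [/\ a != b, [set a; b] \in E,
    (forall x, x != a -> x != b ->
       ([set a; x] \in E) (+) ([set b; x] \in E)) &
    (forall x y, x != a -> x != b -> y != a -> y != b -> [set x; y] \notin E)].

Definition min_edges_in_orbit (G H : graph T) : Prop :=
  forall H', lc_orbit G H' -> #|H| <= #|H'|.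
End Graphs.

Definition Knm (n m : nat) : graph 'I_(n + m) :=
  [set [set x; y] | x in [set x : 'I_(n + m) | (x < n)%N],
                    y in [set y : 'I_(n + m) | (n <= y)%N]].

(* Main.v *)
Require Import Defs.
From mathcomp Require Import all_boot zify.
Set Implicit Arguments. Unset Strict Implicit. Unset Printing Implicit Defensive.

Definition adj {T : finType} (E : graph T) : rel T := fun x y => [set x; y] \in E.

Lemma adjC {T : finType} (E : graph T) x y : adj E x y = adj E y x.
Proof. by rewrite /adj setUC. Qed.

Lemma set2_memE {T : finType} (a b c d : T) :
  [set a; b] = [set c; d] -> (a \in [set c; d]) && (b \in [set c; d]).
Proof. by move=> <-; rewrite !inE !eqxx orbT. Qed.

Lemma lcE {T : finType} (E : graph T) w x y : x != y ->
  adj (local_complement E w) x y =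
  adj E x y (+) [&& x != w, y != w, adj E w x & adj E w y].
Proof.
move=> xy; rewrite /adj /local_complement in_setU !in_setD.
set P := imset2 _ _ _.
have -> : ([set x; y] \in P) = [&& x != w, y != w, adj E w x & adj E w y].
  apply/imset2P/idP.
  - case=> a b; rewrite !inE => /andP[aw ha] /andP[/andP[bw hb] ab] e.
    move: xy; move/andP: (set2_memE e); rewrite !inE => -[/orP[]/eqP-> /orP[]/eqP->];
      by rewrite /adj ?eqxx ?aw ?bw ?ha ?hb.
  - case/and4P=> xw yw hx hy; rewrite /adj in hx hy; exists x y;
    by rewrite ?inE ?xw ?yw ?xy ?hx ?hy.
rewrite /adj.
by case: ([set x; y] \in E); case: [&& x != w, y != w, [set w; x] \in E & [set w; y] \in E].
Qed.

Definition pairs {T : finType} (E : graph T) :=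
  forall e, e \in E -> exists x y, x != y /\ e = [set x; y].

Lemma pairs_lc {T : finType} (E : graph T) w : pairs E -> pairs (local_complement E w).
Proof.
move=> pE e; rewrite /local_complement in_setU !in_setD.
case/orP=> /andP[h1 h2]; first exact: pE.
case/imset2P: h2 => a b _; rewrite !inE => /andP[_ ab] ->.
by exists a, b.
Qed.

Lemma adj_irr {T : finType} (E : graph T) x : pairs E -> adj E x x = false.
Proof.
move=> pE; apply/negP => /pE [a [b [ab e]]].
move/andP: (set2_memE (esym e)); rewrite !inE !orbb => -[/eqP ea /eqP eb].
by rewrite ea eb eqxx in ab.
Qed.

Definition conn {T : finType} (E : graph T) := forall x y, connect (adj E) x y.

Lemma conn_sub {T : finType} (E E' : graph T) :
  (forall x y, adj E x y -> connect (adj E') x y) -> conn E -> conn E'.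
Proof. by move=> H c x y; apply: (connect_sub H). Qed.

Lemma conn_lc {T : finType} (E : graph T) w : conn E -> conn (local_complement E w).
Proof.
apply: conn_sub => x y h.
case: (eqVneq x y) => [->|xy]; first exact: connect0.
case N: [&& x != w, y != w, adj E w x & adj E w y].
  case/and4P: N => xw yw hx hy.
  apply: (@connect_trans _ _ w); apply: connect1.
    by rewrite lcE // eqxx /= ?andbF ?addbF adjC.
  by rewrite lcE 1?eq_sym // eqxx /= ?andbF ?addbF.
by apply: connect1; rewrite lcE // N h.
Qed.

Lemma lc_seq_ind {T : finType} (P : graph T -> Prop) :
  (forall E w, P E -> P (local_complement E w)) ->
  forall E s, P E -> P (lc_seq E s).
Proof. by move=> H E s; elim: s E => [|w s IH] E //= PE; apply: IH; apply: H. Qed.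

Definition stepR {T : finType} (E : graph T) (S : {set T}) : {set T} :=
  S :|: [set y | [exists x in S, adj E x y]].
Definition RR {T : finType} (E : graph T) (r : T) k := iter k (stepR E) [set r].

Lemma RR_mono {T : finType} (E : graph T) r k d : RR E r k \subset RR E r (k + d).
Proof.
elim: d => [|d IH]; first by rewrite addn0.
rewrite addnS; apply: subset_trans IH _; exact: subsetUl.
Qed.

Lemma RR_reach {T : finType} (E : graph T) r p : forall k x, x \in RR E r k ->
  path (adj E) x p -> last x p \in RR E r (k + size p).
Proof.
elim: p => [|y p IH] k x /=; first by rewrite addn0.
move=> xR /andP[hxy pth]; rewrite addnS -addSn; apply: IH pth.
rewrite /RR iterS -/(RR E r k) /stepR in_setU inE; apply/orP; right.
by apply/existsP; exists x; rewrite xR hxy.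
Qed.

Lemma RR_all {T : finType} (E : graph T) r : conn E -> exists K, RR E r K = setT.
Proof.
move=> c.
have: forall s : seq T, exists K, forall v, v \in s -> v \in RR E r K.
  elim=> [|v s [K HK]]; first by exists 0.
  case/connectP: (c r v) => p pth ->.
  have h := RR_reach (k:=0) (x:=r) (set11 r) pth; rewrite add0n in h.
  exists (K + size p) => u; rewrite inE => /orP[/eqP->|us].
    by rewrite addnC; apply: (subsetP (RR_mono E r (size p) K)).
  exact: (subsetP (RR_mono E r K (size p))) (HK _ us).
move/(_ (enum T)) => [K HK]; exists K; apply/setP => v.
by rewrite inE HK // mem_enum.
Qed.

Lemma RR_count {T : finType} (E : graph T) r k :
  #|RR E r k| <= #|[set e in E | e \subset RR E r k]|.+1.
Proof.
elim: k => [|k IH]; first by rewrite /RR /= cards1.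
set S := RR E r k.
have RS : RR E r k.+1 = stepR E S by [].
set D := RR E r k.+1 :\: S.
have SR : S \subset RR E r k.+1 by rewrite RS subsetUl.
pose par y := odflt r [pick x in S | adj E x y].
have parP : forall y, y \in D -> par y \in S /\ adj E (par y) y.
  move=> y; rewrite /D RS /stepR !inE => /andP[yS /orP[]]; first by rewrite (negbTE yS).
  move=> /existsP [x /andP[xS hxy]].
  rewrite /par; case: pickP => [z /andP[zS hz]|/(_ x)]; first by [].
  by rewrite xS hxy.
pose g y := [set y; par y].
have ginj : {in D &, injective g}.
  move=> y1 y2 h1 h2 e.
  have: y1 \in g y2 by rewrite -e /g !inE eqxx.
  rewrite /g !inE => /orP[/eqP //|/eqP ey].
  move: h1; rewrite /D !inE ey (proj1 (parP _ h2)) //.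
have disj : [disjoint [set e in E | e \subset S] & g @: D].
  rewrite -setI_eq0; apply/eqP/setP => e; rewrite !inE.
  apply/negP => /andP[/andP[_ eS] /imsetP[y yD ee]]; rewrite ee in eS.
  move: yD; rewrite /D !inE => /andP[yS _].
  by move/subsetP: eS => /(_ y); rewrite !inE eqxx => /(_ isT); rewrite (negbTE yS).
have sub : [set e in E | e \subset S] :|: g @: D \subset [set e in E | e \subset RR E r k.+1].
  apply/subsetP => e; rewrite !inE => /orP[/andP[eE eS]|/imsetP[y yD ->]].
    by rewrite eE (subset_trans eS SR).
  have [pS hp] := parP _ yD.
  rewrite /g; apply/andP; split; first by rewrite -/(adj E y (par y)) adjC.
  apply/subsetP => z; rewrite in_set2 => /orP[]/eqP->.
    by move: yD; rewrite /D in_setD => /andP[].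
  exact: (subsetP SR).
have cardR : #|RR E r k.+1| = #|S| + #|D|.
  by rewrite -(cardsID S (RR E r k.+1)) (setIidPr SR).
have cardU := cardsU [set e in E | e \subset S] (g @: D).
move: disj; rewrite -setI_eq0 => /eqP di; rewrite di cards0 subn0 card_in_imset // in cardU.
rewrite cardR; apply: leq_trans (_ : #|[set e in E | e \subset S] :|: g @: D|.+1 <= _).
  by rewrite cardU -addSn leq_add2r.
by rewrite ltnS subset_leq_card.
Qed.

Lemma lower_bound {T : finType} (E : graph T) (r : T) : conn E -> #|T| <= #|E|.+1.
Proof.
move=> c; have [K HK] := RR_all r c.
have := RR_count E r K; rewrite HK cardsT => h.
apply: leq_trans h _; rewrite ltnS subset_leq_card //.
by apply/subsetP => e; rewrite inE => /andP[].
Qed.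

Definition nb {T : finType} (E : graph T) u v z := [&& z != u, z != v & adj E u z].
Definition rank2 {T : finType} (E : graph T) u v :=
  [&& [exists z, nb E u v z], [exists z, nb E v u z] &
      [exists z, nb E u v z != nb E v u z]].

Lemma rank2C {T : finType} (E : graph T) u v : rank2 E u v = rank2 E v u.
Proof.
rewrite /rank2.
have -> : [exists z, nb E u v z != nb E v u z] = [exists z, nb E v u z != nb E u v z].
  by apply: eq_existsb => z; rewrite eq_sym.
by rewrite andbCA.
Qed.

Lemma rank2_lc_u {T : finType} (E : graph T) u v : u != v ->
  rank2 (local_complement E u) u v = rank2 E u v.
Proof.
move=> uv.
have e1 : nb (local_complement E u) u v =1 nb E u v.
  move=> z; rewrite /nb; case: (eqVneq z u) => [->|zu] //=.
  by rewrite lcE 1?eq_sym // eqxx /= ?andbF ?addbF.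
have e2 : forall z, nb (local_complement E u) v u z =
                    nb E v u z (+) (adj E u v && nb E u v z).
  move=> z; rewrite /nb; case: (eqVneq z u) => [->|zu] /=; first by rewrite !andbF.
  case: (eqVneq z v) => [->|zv] /=; first by rewrite !andbF.
  by rewrite lcE 1?eq_sym // zu uv.
rewrite /rank2.
have -> : [exists z, nb (local_complement E u) u v z] = [exists z, nb E u v z].
  exact: eq_existsb.
have -> : [exists z, nb (local_complement E u) v u z] =
          [exists z, nb E v u z (+) (adj E u v && nb E u v z)].
  exact: eq_existsb.
have -> : [exists z, nb (local_complement E u) u v z != nb (local_complement E u) v u z] =
          [exists z, nb E u v z != nb E v u z (+) (adj E u v && nb E u v z)].
  by apply: eq_existsb => z; rewrite e1 e2.
case: (adj E u v).
  have -> : [exists z, nb E v u z (+) (true && nb E u v z)] =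
            [exists z, nb E u v z != nb E v u z].
    by apply: eq_existsb => z; case: (nb E u v z); case: (nb E v u z).
  have -> : [exists z, nb E u v z != nb E v u z (+) (true && nb E u v z)] =
            [exists z, nb E v u z].
    by apply: eq_existsb => z; case: (nb E u v z); case: (nb E v u z).
  by rewrite [_ && [exists z, nb E v u z]]andbC.
have -> : [exists z, nb E v u z (+) (false && nb E u v z)] = [exists z, nb E v u z].
  by apply: eq_existsb => z; rewrite addbF.
have -> : [exists z, nb E u v z != nb E v u z (+) (false && nb E u v z)] =
          [exists z, nb E u v z != nb E v u z].
  by apply: eq_existsb => z; rewrite addbF.
by [].
Qed.

Lemma nb_lc {T : finType} (E : graph T) w u v z : w != u -> w != v ->
  nb (local_complement E w) u v z =
  nb E u v z (+) (nb E u v w && [&& z != u, z != v, z != w & adj E w z]).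
Proof.
move=> wu wv; rewrite /nb wu wv /=.
case: (eqVneq z u) => [->|zu] /=; first by rewrite !andbF.
case: (eqVneq z v) => [->|zv] /=; first by rewrite !andbF.
rewrite lcE 1?eq_sym // wu /= (adjC E u w).
by case: (z != w); case: (adj E w u).
Qed.

Lemma phi_exists {T : finType} (X c : pred T) w : c w = false ->
  [exists z, X z (+) (X w && c z)] = [exists z, X z].
Proof.
move=> cw; case Xw: (X w).
  by apply/idP/idP => _; apply/existsP; exists w; rewrite Xw ?cw.
by apply: eq_existsb => z; rewrite addbF.
Qed.

Lemma phi_neq {T : finType} (X Y c : pred T) w : c w = false ->
  [exists z, X z (+) (X w && c z) != Y z (+) (Y w && c z)] =
  [exists z, X z != Y z].
Proof.
move=> cw; case: (eqVneq (X w) (Y w)) => [e|ne].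
  by apply: eq_existsb => z; rewrite e; case: (Y w && c z); case: (X z); case: (Y z).
by apply/idP/idP => _; apply/existsP; exists w; rewrite ?cw ?andbF ?addbF.
Qed.

Lemma rank2_lc {T : finType} (E : graph T) w u v : u != v ->
  rank2 (local_complement E w) u v = rank2 E u v.
Proof.
move=> uv.
case: (eqVneq w u) => [->|wu]; first exact: rank2_lc_u.
case: (eqVneq w v) => [->|wv].
  by rewrite rank2C rank2_lc_u 1?eq_sym // rank2C.
pose c z := [&& z != u, z != v, z != w & adj E w z].
have cw : c w = false by rewrite /c eqxx !andbF.
rewrite /rank2.
have E1 : nb (local_complement E w) u v =1 fun z => nb E u v z (+) (nb E u v w && c z).
  by move=> z; rewrite nb_lc.
have E2 : nb (local_complement E w) v u =1 fun z => nb E v u z (+) (nb E v u w && c z).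
  move=> z; rewrite nb_lc // /c; congr (_ (+) (_ && _)).
  by case: (z != u); case: (z != v).
have -> : [exists z, nb (local_complement E w) u v z] =
   [exists z, nb E u v z (+) (nb E u v w && c z)] by exact: eq_existsb.
have -> : [exists z, nb (local_complement E w) v u z] =
   [exists z, nb E v u z (+) (nb E v u w && c z)] by exact: eq_existsb.
have -> : [exists z, nb (local_complement E w) u v z != nb (local_complement E w) v u z]
   = [exists z, nb E u v z (+) (nb E u v w && c z) != nb E v u z (+) (nb E v u w && c z)].
  by apply: eq_existsb => z; rewrite E1 E2.
by rewrite !phi_exists // phi_neq.
Qed.

Lemma conn_closed {T : finType} (e : rel T) (S : pred T) :
  (forall a b, S a -> e a b -> S b) -> forall a b, connect e a b -> S a -> S b.
Proof.
move=> H a b /connectP [p pth ->]; elim: p a pth => //= c p IH a /andP[eac pth] Sa.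
exact: IH pth (H _ _ Sa eac).
Qed.

Lemma set2_neq {T : finType} (a b c d : T) : b \notin [set c; d] -> [set a; b] != [set c; d].
Proof. by apply: contra => /eqP <-; rewrite set22. Qed.

Lemma set2_neq1 {T : finType} (a b c d : T) : a \notin [set c; d] -> [set a; b] != [set c; d].
Proof. by apply: contra => /eqP <-; rewrite set21. Qed.

Lemma adjK n m (x y : 'I_(n + m)) : adj (Knm n m) x y = ((x < n) != (y < n)).
Proof.
rewrite /adj /Knm; apply/imset2P/idP.
- case=> a b; rewrite !inE => an bn e.
  have bn' : (b < n) = false by rewrite ltnNge bn.
  have ab : a != b by apply/eqP => eab; rewrite eab bn' in an.
  move/andP: (set2_memE (esym e)) => [ha hb]; move/andP: (set2_memE e) => [hx hy].
  rewrite !inE in ha hb hx hy.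
  case/orP: hx => /eqP ex; case/orP: hy => /eqP ey; rewrite ex ey ?an ?bn' //.
    by rewrite ex ey orbb eq_sym (negbTE ab) in hb.
  by rewrite ex ey orbb (negbTE ab) in ha.
- case xn: (x < n) => /= yn.
    exists x y; [by rewrite inE xn | by rewrite inE leqNgt; move: yn; case: (y < n) | by []].
  exists y x; [by rewrite inE; move: yn; case: (y < n) | by rewrite inE leqNgt xn | by rewrite setUC].
Qed.

Lemma witK n m (x : 'I_(n + m)) (t : bool) : 2 <= n -> 2 <= m ->
  exists z : 'I_(n + m), z != x /\ (z < n) = t.
Proof.
move=> n2 m2.
have mk : forall i, i < n + m -> exists z : 'I_(n + m), nat_of_ord z = i.
  by move=> i h; exists (Ordinal h).
have vne : forall z1 z2 : 'I_(n + m), nat_of_ord z1 != nat_of_ord z2 -> z1 != z2.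
  by move=> z1 z2; apply: contra => /eqP ->.
case: t.
  have [z0 e0] := mk 0 ltac:(lia).
  have [z1 e1] := mk 1 ltac:(lia).
  case: (eqVneq z0 x) => [e|ne].
    exists z1; split; last by rewrite e1; lia.
    by rewrite -e; apply: vne; rewrite e0 e1.
  by exists z0; rewrite e0; split => //; lia.
have [z0 e0] := mk n ltac:(lia).
have [z1 e1] := mk n.+1 ltac:(lia).
case: (eqVneq z0 x) => [e|ne].
  exists z1; split; last by rewrite e1; lia.
  by rewrite -e; apply: vne; rewrite e0 e1; lia.
by exists z0; rewrite e0; split => //; lia.
Qed.

Lemma rank2K n m (u v : 'I_(n + m)) : 2 <= n -> 2 <= m -> u != v ->
  rank2 (Knm n m) u v = ((u < n) != (v < n)).
Proof.
move=> n2 m2 uv.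
have nbK : forall a b z, nb (Knm n m) a b z = [&& z != a, z != b & (a < n) != (z < n)].
  by move=> a b z; rewrite /nb adjK.
case: (eqVneq (u < n) (v < n)) => [e|ne].
  rewrite /rank2.
  have -> : [exists z, nb (Knm n m) u v z != nb (Knm n m) v u z] = false.
    apply/negbTE; rewrite negb_exists; apply/forallP => z; rewrite !nbK e.
    by case: (z != u); case: (z != v); case: ((v < n) != (z < n)).
  by rewrite !andbF.
have [z1 [z1v s1]] := witK v (v < n) n2 m2.
have [z2 [z2u s2]] := witK u (u < n) n2 m2.
have z1u : z1 != u.
  apply/eqP => h; rewrite h in s1; by rewrite s1 eqxx in ne.
have z2v : z2 != v.
  apply/eqP => h; rewrite h in s2; by rewrite s2 eqxx in ne.
apply/and3P; split; apply/existsP.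
- by exists z1; rewrite nbK z1u z1v s1 ne.
- by exists z2; rewrite nbK z2v z2u s2 eq_sym ne.
- by exists z1; rewrite !nbK z1u z1v s1 ne eqxx.
Qed.

Lemma bs_le {T : finType} (E : graph T) : pairs E -> binary_star E -> #|E|.+1 <= #|T|.
Proof.
move=> pE [a [b [ab hab hx hxy]]].
pose f x := if x == b then [set a; b] else if adj E a x then [set a; x] else [set b; x].
have sub : E \subset f @: [set~ a].
  apply/subsetP => e eE; have [p [q [pq ee]]] := pE e eE.
  have eE' : [set p; q] \in E by rewrite -ee.
  have ba : b != a by rewrite eq_sym.
  have fb : f b = [set a; b] by rewrite /f eqxx.
  have fa : forall x, x != b -> adj E a x -> f x = [set a; x].
    by move=> x xb h; rewrite /f (negbTE xb) h.
  have fbx : forall x, x != a -> x != b -> adj E b x -> f x = [set b; x].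
    move=> x xa xb h; rewrite /f (negbTE xb).
    have := hx x xa xb; rewrite -/(adj E a x) -/(adj E b x) h.
    by case: (adj E a x).
  have mem : forall x, x != a -> f x \in f @: [set~ a].
    by move=> x xa; apply: imset_f; rewrite !inE.
  rewrite ee.
  case: (eqVneq p a) => [pa|pa].
    case: (eqVneq q b) => [qb|qb].
      by rewrite pa qb -fb; apply: mem.
    have qa : q != a by rewrite -pa eq_sym.
    rewrite pa -fa //; first exact: mem.
    by rewrite -pa.
  case: (eqVneq p b) => [pb|pb].
    case: (eqVneq q a) => [qa|qa].
      by rewrite pb qa setUC -fb; apply: mem.
    have qb : q != b by rewrite -pb eq_sym.
    rewrite pb -fbx //; first exact: mem.
    by rewrite -pb.
  case: (eqVneq q a) => [qa|qa].
    rewrite qa setUC -fa //; first exact: mem.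
    by rewrite /adj setUC -qa.
  case: (eqVneq q b) => [qb|qb].
    rewrite qb setUC -fbx //; first exact: mem.
    by rewrite /adj setUC -qb.
  by have := hxy p q pa pb qa qb; rewrite eE'.
have := subset_leq_card sub.
move/leq_trans/(_ (leq_imset_card _ _)); rewrite cardsC1 => h.
have : 0 < #|T| by apply/card_gt0P; exists a.
by move: h; case: #|T|.
Qed.

Lemma bs_of n m (G : graph 'I_(n + m)) : 2 <= n -> 2 <= m -> pairs G -> conn G ->
  (forall u v, u != v -> rank2 G u v = ((u < n) != (v < n))) ->
  (forall x y, adj G x y -> connect (adj (G :\ [set x; y])) x y -> False) ->
  binary_star G.
Proof.
move=> n2 m2 pG cG rG noRem.
have sym : forall x y, adj G x y = adj G y x by move=> x y; apply: adjC.
have irr : forall x, adj G x x = false by move=> x; apply: adj_irr.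
pose big x := [exists s1, exists s2, [&& s1 != s2, adj G x s1 & adj G x s2]].
have nonempty : forall u, exists x, adj G u x.
  move=> u; have [v [vu sv]] := witK u (~~ (u < n)) n2 m2.
  have : rank2 G u v by rewrite rG 1?eq_sym // sv; case: (u < n).
  by case/and3P => /existsP [z /and3P[_ _ h]] _ _; exists z.
have nonbig : forall u x, ~~ big u -> adj G u x -> forall z, adj G u z -> z = x.
  move=> u x nbu hx z hz; apply/eqP; apply: contraNT nbu => zx.
  by apply/existsP; exists z; apply/existsP; exists x; rewrite zx hz hx.
have sameside : forall u x, adj G u x -> (forall z, adj G u z -> z = x) -> (x < n) = (u < n).
  move=> u x hx hu; case: (eqVneq (x < n) (u < n)) => // ne; exfalso.
  have ux : u != x by apply/eqP => e; rewrite e irr in hx.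
  have : rank2 G u x by rewrite rG // eq_sym.
  by case/and3P => /existsP [z /and3P[_ zx hz]] _ _; rewrite (hu z hz) eqxx in zx.
have pairclosed : forall u x, adj G u x -> (forall z, adj G u z -> z = x) ->
    (forall z, adj G x z -> z = u) -> False.
  move=> u x hx hu hxu.
  have [v [_ sv]] := witK u (~~ (u < n)) n2 m2.
  have cl : forall a b, (fun z => (z == u) || (z == x)) a -> adj G a b ->
      (fun z => (z == u) || (z == x)) b.
    move=> a b /= /orP[]/eqP -> h.
      by rewrite (hu _ h) eqxx orbT.
    by rewrite (hxu _ h) eqxx.
  have := conn_closed cl (cG u v).
  rewrite /= eqxx => /(_ isT) /orP[]/eqP ev.
    by move: sv; rewrite ev; case: (u < n).
  by move: sv; rewrite ev (sameside u x hx hu); case: (u < n).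
have LP : forall u, ~~ big u -> exists x,
    [/\ adj G u x, forall z, adj G u z -> z = x, (x < n) = (u < n) & big x].
  move=> u nbu; have [x hx] := nonempty u; have hu := nonbig u x nbu hx.
  exists x; split => //; first exact: sameside.
  case Bx: (big x) => //; exfalso.
  apply: (pairclosed u x hx hu); apply: nonbig; [by rewrite Bx | by rewrite sym].
have UB : forall u u', big u -> big u' -> (u < n) = (u' < n) -> u = u'.
  move=> u u' bu bu' side; case: (eqVneq u u') => // uu'; exfalso.
  have r0 : rank2 G u u' = false by rewrite rG // side eqxx.
  case/existsP: bu => s1 /existsP [s2 /and3P[s12 h1 h2]].
  case/existsP: bu' => t1 /existsP [t2 /and3P[t12 g1 g2]].
  have ne1 : forall z, adj G u z -> z != u by move=> z h; apply/eqP => e; rewrite e irr in h.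
  have ne2 : forall z, adj G u' z -> z != u' by move=> z h; apply/eqP => e; rewrite e irr in h.
  have ex1 : [exists z, nb G u u' z].
    apply/existsP; case: (eqVneq s1 u') => e1.
      by exists s2; rewrite /nb ne1 // h2 -e1 eq_sym s12.
    by exists s1; rewrite /nb ne1 // h1 e1.
  have ex2 : [exists z, nb G u' u z].
    apply/existsP; case: (eqVneq t1 u) => e1.
      by exists t2; rewrite /nb ne2 // g2 -e1 eq_sym t12.
    by exists t1; rewrite /nb ne2 // g1 e1.
  have eqX : forall z, nb G u u' z = nb G u' u z.
    move=> z; move: r0; rewrite /rank2 ex1 ex2 /= => /negbT.
    by rewrite negb_exists => /forallP /(_ z); rewrite negbK => /eqP.
  case huu: (adj G u u').
    case/existsP: ex1 => s hs.
    have hs' := hs; rewrite eqX in hs'.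
    case/and3P: hs => su su' us; case/and3P: hs' => _ _ u's.
    apply: (noRem u u' huu).
    have d1 : [set u; s] != [set u; u'] by apply: set2_neq; rewrite !inE negb_or su su'.
    have d2 : [set s; u'] != [set u; u'] by apply: set2_neq1; rewrite !inE negb_or su su'.
    apply: (@connect_trans _ _ s); apply: connect1; rewrite /adj in_setD1.
      by rewrite d1.
    by rewrite d2 /= -/(adj G s u') sym.
  have s1u' : s1 != u' by apply/eqP => e; rewrite -e h1 in huu.
  have s2u' : s2 != u' by apply/eqP => e; rewrite -e h2 in huu.
  have hs1 : nb G u u' s1 by rewrite /nb ne1 // s1u' h1.
  have hs2 : nb G u u' s2 by rewrite /nb ne1 // s2u' h2.
  rewrite eqX in hs1; rewrite eqX in hs2.
  case/and3P: hs1 => _ _ k1; case/and3P: hs2 => _ _ k2.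
  have uu'' : u' != u by rewrite eq_sym.
  have d1 : [set u; s2] != [set u; s1].
    by apply: set2_neq; rewrite !inE negb_or (ne1 s2 h2) (eq_sym s2 s1) s12.
  have d2 : [set s2; u'] != [set u; s1].
    by apply: set2_neq; rewrite !inE negb_or uu'' (eq_sym u' s1) s1u'.
  have d3 : [set u'; s1] != [set u; s1].
    by apply: set2_neq1; rewrite !inE negb_or uu'' (eq_sym u' s1) s1u'.
  apply: (noRem u s1 h1).
  apply: (@connect_trans _ _ s2); first apply: connect1.
    by rewrite /adj in_setD1 d1.
  apply: (@connect_trans _ _ u'); apply: connect1; rewrite /adj in_setD1.
    by rewrite d2 /= -/(adj G s2 u') sym.
  by rewrite d3.
have h0 : 0 < n + m by lia.
pose o := Ordinal h0.
have bigside : forall t : bool, exists a, big a && ((a < n) == t).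
  move=> t; have [u [_ su]] := witK o t n2 m2.
  case Bu: (big u); first by exists u; rewrite Bu su eqxx.
  have [x [_ _ sx bx]] := LP u (negbT Bu).
  by exists x; rewrite bx sx su eqxx.
have [a /andP[ba /eqP sa]] := bigside true.
have [b /andP[bb /eqP sb]] := bigside false.
have ab : a != b by apply/eqP => e; rewrite e sb in sa.
have bigab : forall z, big z -> z = a \/ z = b.
  move=> z bz; case sz: (z < n); [left | right]; apply: UB => //; by rewrite sz ?sa ?sb.
have cross : forall x z, adj G x z -> (x < n) != (z < n) -> big x && big z.
  move=> x z h ne; case Bx: (big x); last first.
    have [y [hy hu sy _]] := LP x (negbT Bx).
    by rewrite (hu z h) sy eqxx in ne.
  case Bz: (big z) => //.
  have [y [hy hu sy _]] := LP z (negbT Bz).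
  by rewrite sym in h; rewrite (hu x h) sy eqxx in ne.
have hab : adj G a b.
  case Hab: (adj G a b) => //; exfalso.
  have cl : forall x z : 'I_(n + m), (fun z : 'I_(n + m) => z < n) x -> adj G x z -> (fun z : 'I_(n + m) => z < n) z.
    move=> x z /= xn h; case: (boolP (z < n)) => // zn.
    have ne : (x < n) != (z < n) by rewrite xn (negbTE zn).
    have /andP[bx bz] := cross x z h ne.
    have ex : x = a by case: (bigab x bx) => // e; rewrite e sb in xn.
    have ez : z = b by case: (bigab z bz) => // e; rewrite e sa in zn.
    by rewrite ex ez Hab in h.
  have := conn_closed cl (cG a b).
  by rewrite /= sa sb => /(_ isT).
have nbx : forall x, x != a -> x != b -> ~~ big x.
  move=> x xa xb; apply/negP => /bigab [] e.
    by rewrite e eqxx in xa.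
  by rewrite e eqxx in xb.
exists a, b; split => //.
  move=> x xa xb.
  have [y [hy hu sy by_]] := LP x (nbx x xa xb).
  have key : forall c, adj G x c = (c == y).
    by move=> c; apply/idP/eqP => [h|->]; [exact: hu | exact: hy].
  change (adj G a x (+) adj G b x); rewrite !(sym _ x) !key.
  case: (bigab y by_) => ->; rewrite eqxx ?(negbTE ab) //.
  by rewrite eq_sym (negbTE ab).
move=> x y xa xb ya yb; apply/negP => h.
have [y' [hy hu sy by_]] := LP x (nbx x xa xb).
have ey := hu y h.
case: (bigab y' by_) => e; rewrite -ey in e.
  by rewrite e eqxx in ya.
by rewrite e eqxx in yb.
Qed.

Lemma pairsK n m : pairs (Knm n m).
Proof.
move=> e /imset2P [a b]; rewrite !inE => an bn ->; exists a, b; split => //.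
by apply/eqP => eab; rewrite eab ltnNge bn in an.
Qed.

Lemma connK n m : 2 <= n -> 2 <= m -> conn (Knm n m).
Proof.
move=> n2 m2 x y; case: (eqVneq (x < n) (y < n)) => e; last first.
  by apply: connect1; rewrite adjK.
have [z [_ sz]] := witK x (~~ (x < n)) n2 m2.
apply: (@connect_trans _ _ z); apply: connect1; rewrite adjK sz -?e;
  by case: (x < n).
Qed.

Lemma H0_bs n m (a0 b0 : 'I_(n + m)) : a0 < n -> ~~ (b0 < n) ->
  binary_star (lc_seq (Knm n m) [:: a0; b0; a0]).
Proof.
move=> pa pb.
have ab : a0 != b0 by apply/eqP => e; rewrite e (negbTE pb) in pa.
rewrite /lc_seq /=.
set E1 := local_complement (Knm n m) a0.
set E2 := local_complement E1 b0.
set E3 := local_complement E2 a0.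
have na : forall z : 'I_(n + m), ~~ (z < n) -> z != a0.
  by move=> z h; apply/eqP => e; rewrite e pa in h.
have nb0 : forall z : 'I_(n + m), z < n -> z != b0.
  by move=> z h; apply/eqP => e; rewrite -e h in pb.
have adj1 : forall x y, x != y ->
    adj E1 x y = ((x < n) != (y < n)) (+) (~~ (x < n) && ~~ (y < n)).
  move=> x y xy; rewrite /E1 lcE // !adjK pa.
  case X: (x < n); case Y: (y < n) => //=; rewrite ?andbF //.
  by rewrite na ?X // na ?Y.
have adj1b : forall x, x != b0 -> adj E1 b0 x = true.
  by move=> x xb; rewrite adj1 1?eq_sym // (negbTE pb); case: (x < n).
have adj1ab : adj E1 a0 b0 = true by rewrite adj1 // pa (negbTE pb).
have adj2 : forall x y, x != y -> adj E2 x y = adj E1 x y (+) ((x != b0) && (y != b0)).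
  move=> x y xy; rewrite /E2 lcE //.
  case: (eqVneq x b0) => [->|xb] /=; first by rewrite ?andbF ?addbF.
  case: (eqVneq y b0) => [->|yb] /=; first by rewrite ?andbF ?addbF.
  by rewrite !adj1b.
have adj2a : forall x, x != a0 -> x != b0 -> adj E2 a0 x = (x < n).
  move=> x xa xb; have ax : a0 != x by rewrite eq_sym.
  rewrite adj2 // adj1 // pa ab xb /=.
  by case: (x < n).
have adj2ab : adj E2 a0 b0 = true by rewrite adj2 // adj1ab eqxx andbF.
have adj3 : forall x y, x != y -> adj E3 x y = adj E2 x y (+) [&& x != a0, y != a0, adj E2 a0 x & adj E2 a0 y].
  by move=> x y xy; exact: (lcE E2 a0 xy).
have pE3 : pairs E3 := pairs_lc (w:=a0) (pairs_lc (w:=b0) (pairs_lc (w:=a0) (@pairsK n m))).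
clearbody E3 E2 E1.
exists a0, b0; split.
- exact: ab.
- change (adj E3 a0 b0); rewrite (adj3 _ _ ab) eqxx /= adj2ab.
  by [].
- move=> x xa xb; change (adj E3 a0 x (+) adj E3 b0 x).
  have ax : a0 != x by rewrite eq_sym.
  have bx : b0 != x by rewrite eq_sym.
  rewrite (adj3 _ _ ax) (adj3 _ _ bx) eqxx (adj2a x xa xb) (eq_sym b0 a0) ab xa adj2ab.
  rewrite (adj2 _ _ bx) (adj1b x xb) eqxx.
  by case: (x < n).
- move=> x y xa xb ya yb; change (~~ adj E3 x y).
  case: (eqVneq x y) => [->|xy]; first by rewrite (adj_irr y pE3).
  rewrite (adj3 _ _ xy) xa ya (adj2a x xa xb) (adj2a y ya yb) (adj2 _ _ xy) (adj1 _ _ xy) xb yb.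
  by case: (x < n); case: (y < n).
Qed.

Lemma connect_adjC {T : finType} (E : graph T) x y :
  connect (adj E) x y = connect (adj E) y x.
Proof. by apply: sym_connect_sym => u w; exact: adjC. Qed.

Theorem theorem5 (n m : nat) (G : graph 'I_(n + m)) :
  2 <= n -> 2 <= m -> lc_orbit (Knm n m) G ->
  (min_edges_in_orbit (Knm n m) G <-> binary_star G) /\
  (binary_star G -> #|G| = n + m - 1).
Proof.
move=> n2 m2 [s ->].
have h0 : 0 < n + m by lia.
have hn : n < n + m by lia.
pose a0 := Ordinal h0; pose b0 := Ordinal hn.
have pa : a0 < n by exact: ltnW n2.
have pb : ~~ (b0 < n) by rewrite /= ltnn.
set K := Knm n m.
have HP : forall s, pairs (lc_seq K s).
  move=> s0; exact: (@lc_seq_ind _ pairs (fun E w => @pairs_lc _ E w) K s0 (@pairsK n m)).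
have HC : forall s, conn (lc_seq K s).
  move=> s0; exact: (@lc_seq_ind _ conn (fun E w => @conn_lc _ E w) K s0 (connK n2 m2)).
have HR : forall s u v, u != v -> rank2 (lc_seq K s) u v = ((u < n) != (v < n)).
  move=> s0 u v uv; rewrite -(rank2K n2 m2 uv).
  exact: (@lc_seq_ind _ (fun E => rank2 E u v = rank2 K u v)
            (fun E w h => etrans (rank2_lc E w uv) h) K s0 erefl).
have low : forall s, n + m <= #|lc_seq K s|.+1.
  by move=> s0; have := lower_bound a0 (HC s0); rewrite card_ord.
have bsle : forall s, binary_star (lc_seq K s) -> #|lc_seq K s|.+1 <= n + m.
  by move=> s0 b; have := bs_le (HP s0) b; rewrite card_ord.
have hH0 := H0_bs pa pb.
split; [split|].
- move=> hmin.
  have small : #|lc_seq K s| < n + m.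
    exact: (leq_ltn_trans (hmin _ (ex_intro _ [:: a0; b0; a0] erefl)) (bsle _ hH0)).
  apply: (bs_of n2 m2 (HP s) (HC s) (HR s)).
  move=> x y hxy cxy.
  set G0 := lc_seq K s in small hxy cxy *.
  have cG' : conn (G0 :\ [set x; y]).
    apply: (conn_sub _ (HC s)) => a b hab.
    case: (eqVneq [set a; b] [set x; y]) => [e|ne]; last first.
      by apply: connect1; rewrite /adj in_setD1 ne.
    move/andP: (set2_memE e) => []; rewrite !inE => /orP[]/eqP-> /orP[]/eqP->.
    + exact: connect0.
    + exact: cxy.
    + by rewrite connect_adjC.
    + exact: connect0.
  have := lower_bound a0 cG'; rewrite card_ord.
  have := cardsD1 [set x; y] G0; rewrite -/(adj G0 x y) hxy add1n.
  move=> e1 e2; rewrite e1 in small.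
  by have := leq_trans small e2; rewrite ltnn.
- move=> bsG H' [s' ->]; have := bsle s bsG; have := low s' => h1 h2.
  by rewrite -ltnS; apply: leq_trans h2 h1.
- move=> bsG; have := bsle s bsG; have := low s => h1 h2.
  have e : #|lc_seq K s|.+1 = n + m by apply/eqP; rewrite eqn_leq h2 h1.
  apply: (@addIn 1); rewrite addn1 e subnK //; lia.
Qed.
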